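(* Assume $D$ is irreducible with invariant distribution $\pi$. Then for every $m\ge1$ the steady-state binomial moment satisfies $$B_m\le\sum_{\substack{l_1+\cdots+l_k=m\\ l_1,\dots,l_k\ge1}}\frac{1}{\delta^k\,l_1(l_1+l_2)\cdots(l_1+l_2+\cdots+l_k)}\prod_{i=1}^k\lVert C_{l_i}\rVert_\infty .$$
   Context: Standing model. Fix $N\ge1$, $\delta>0$; rates $a_{i,j}\ge0$ ($i\ne j$) and $b^{[r]}_{i,j}\ge0$ ($r\ge1$) with $\sum_r r^pb^{[r]}_{i,j}<\infty$ for all $p$. $D_r:=(b^{[r]}_{i,j})$; $D_0$ has off-diagonal entries $a_{i,j}$ and diagonal $a_{i,i}:=-\sum_{k\ne i}a_{i,k}-\sum_k\sum_rb^{[r]}_{i,k}$; $D:=D_0+\sum_{r\ge1}D_r$; $C_r:=\sum_{n\ge r}\binom nrD_n$. For the Markov chain $(S(t),M(t))$ on $\{1,\dots,N\}\times\mathbb N$ with jumps $(i,m)\to(j,m)$ at rate $a_{i,j}$, $(i,m)\to(j,m+r)$ at rate $b^{[r]}_{i,j}$, $(i,m)\to(i,m-1)$ at rate $m\delta$, let $\mathbb P_{i,j}(m;t)=\Pr(S(t)=j,M(t)=m\mid S(0)=i,M(0)=0)$, $[\mathcal B_m(t)]_{i,j}=\sum_{n\ge m}\binom nm\mathbb P_{i,j}(n;t)$, and $B_m:=\lim_{t\to\infty}\pi^\top\mathcal B_m(t)\mathbf 1$. Equivalently $B_m=\sum_{l_1+\cdots+l_k=m}\frac1{m\delta}\pi^\top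 C_{l_1}(l_1\delta I-D)^{-1}C_{l_2}\cdots[(l_1+\cdots+l_{k-1})\delta I-D]^{-1}C_{l_k}\mathbf 1$. $\lVert\cdot\rVert_\infty$ is the matrix norm induced by the vector max-norm (maximum absolute row sum). Sums over ''$l_1+\cdots+l_k=m$'' range over all $k\ge1$ and ordered compositions of $m$ into positive parts. *)

(* Defs.v *)
From HB Require Import structures.
From mathcomp Require Import all_boot all_order all_algebra.
From mathcomp Require Import all_classical all_reals all_analysis.
Set Implicit Arguments. Unset Strict Implicit. Unset Printing Implicit Defensive.
Import Order.TTheory GRing.Theory Num.Theory.
Local Open Scope ring_scope.

Section Model.
Variables (R : realType) (N : nat).
Variable (a : 'I_N -> 'I_N -> R).      (* a i j, used for i <> j *)
Variable (b : nat -> 'I_N -> 'I_N -> R). (* b r i j = b^{[r]}_{i,j}, used for r >= 1 *)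

Definition rsum_from (m : nat) (u : nat -> R) : R :=
  limn (fun n => \sum_(m <= k < n) u k).

Definition Dr (r : nat) : 'M[R]_N := \matrix_(i, j) b r i j.

Definition D0 : 'M[R]_N := \matrix_(i, j)
  if i == j then
    - (\sum_(k < N | k != i) a i k) - \sum_(k < N) rsum_from 1 (fun r => b r i k)
  else a i j.

Definition Dgen : 'M[R]_N :=
  D0 + \matrix_(i, j) rsum_from 1 (fun r => b r i j).

Definition Cmat (r : nat) : 'M[R]_N :=
  \matrix_(i, j) rsum_from r (fun n => 'C(n, r)%:R * b n i j).

(* C_{l_1} (l_1 d I - D)^{-1} C_{l_2} ... [(l_1+...+l_{k-1}) d I - D]^{-1} C_{l_k},
   with acc = sum of the parts already consumed *)
Fixpoint chain (delta : R) (acc : nat) (s : seq nat) : 'M[R]_N :=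
  match s with
  | [::] => 1%:M
  | l :: s' =>
      match s' with
      | [::] => Cmat l
      | _ => Cmat l *m invmx (((acc + l)%:R * delta)%:M - Dgen)
                 *m chain delta (acc + l) s'
      end
  end.

End Model.

Fixpoint comps_aux (fuel n : nat) : seq (seq nat) :=
  if n == 0%N then [:: [::]] else
  match fuel with
  | 0 => [::]
  | f.+1 => flatten [seq map (cons l) (comps_aux f (n - l)) | l <- iota 1 n]
  end.

Definition compositions (m : nat) : seq (seq nat) := comps_aux m m.

Definition Bmoment (R : realType) (N : nat) (a : 'I_N -> 'I_N -> R)
  (b : nat -> 'I_N -> 'I_N -> R) (delta : R) (pi : 'rV[R]_N) (m : nat) : R :=
  \sum_(s <- compositions m)
     (m%:R * delta)^-1 * (pi *m chain a b delta 0 s *m (const_mx 1 : 'cV[R]_N)) 0 0.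

Definition norm_inf (R : realType) (N : nat) (A : 'M[R]_N) : R :=
  \big[Num.max/0]_(i < N) \sum_(j < N) `|A i j|.

Definition irreducible_gen (R : realType) (N : nat) (Q : 'M[R]_N) : Prop :=
  forall i j : 'I_N, connect (fun x y => (x != y) && (0 < Q x y)) i j.

Definition invariant_dist (R : realType) (N : nat) (Q : 'M[R]_N) (pi : 'rV[R]_N) : Prop :=
  (forall i, 0 <= pi 0 i) /\ \sum_(i < N) pi 0 i = 1 /\ pi *m Q = 0.

(* Main.v *)
Require Import Defs.
From HB Require Import structures.
From mathcomp Require Import all_boot all_order all_algebra.
From mathcomp Require Import all_classical all_reals all_analysis.
From mathcomp Require Import ring lra.
Import Order.TTheory GRing.Theory Num.Theory.
Local Open Scope ring_scope.

Section Norms.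
Variables (R : realType) (N : nat).

Lemma norm_ge0 (A : 'M[R]_N) : 0 <= norm_inf A.
Proof.
rewrite /norm_inf; apply: (big_ind (fun x => 0 <= x)) => //.
  by move=> x y hx hy; rewrite le_max hx.
by move=> i _; apply: sumr_ge0 => j _.
Qed.

Lemma row_le_norm (A : 'M[R]_N) i : \sum_j `|A i j| <= norm_inf A.
Proof. exact: le_bigmax. Qed.

Lemma norm_le (A : 'M[R]_N) c : 0 <= c ->
  (forall i, \sum_j `|A i j| <= c) -> norm_inf A <= c.
Proof. by move=> c0 h; apply: bigmax_le. Qed.

Lemma norm_mul (A B : 'M[R]_N) : norm_inf (A *m B) <= norm_inf A * norm_inf B.
Proof.
apply: norm_le; first by rewrite mulr_ge0 ?norm_ge0.
move=> i.
apply: (@le_trans _ _ (\sum_j \sum_k `|A i k| * `|B k j|)).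
  apply: ler_sum => j _; rewrite mxE.
  apply: le_trans (ler_norm_sum _ _ _) _.
  by apply: ler_sum => k _; rewrite normrM.
rewrite exchange_big /=.
apply: (@le_trans _ _ (\sum_k `|A i k| * norm_inf B)).
  apply: ler_sum => k _; rewrite -mulr_sumr.
  by apply: ler_wpM2l => //; apply: row_le_norm.
rewrite -mulr_suml; apply: ler_wpM2r; first exact: norm_ge0.
exact: row_le_norm.
Qed.

End Norms.

Section Gen.
Variables (R : realType) (N : nat) (delta : R).
Variables (a : 'I_N -> 'I_N -> R) (b : nat -> 'I_N -> 'I_N -> R).
Hypothesis HN : (0 < N)%N.
Hypothesis Ha : forall i j : 'I_N, i != j -> 0 <= a i j.
Hypothesis Hb : forall (r : nat) (i j : 'I_N), (0 < r)%N -> 0 <= b r i j.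
Hypothesis Hmom : forall (p : nat) (i j : 'I_N),
     cvgn (fun n => \sum_(1 <= r < n) (r%:R ^+ p * b r i j)).

Lemma rsum_ge0 i j : 0 <= rsum_from 1 (fun r => b r i j).
Proof.
rewrite /rsum_from.
have -> : (fun n => \sum_(1 <= r < n) b r i j) =
          (fun n => \sum_(1 <= r < n) (r%:R ^+ 0 * b r i j)).
  by apply/funext => n; apply: eq_bigr => r _; rewrite expr0 mul1r.
apply: limr_ge; first exact: Hmom.
apply: nearW => n; rewrite big_nat_cond; apply: sumr_ge0 => r /andP[/andP[r1 _] _].
by rewrite expr0 mul1r; apply: Hb.
Qed.

Local Notation D := (Dgen a b).

Lemma D_offdiag i j : i != j -> 0 <= D i j.
Proof.
move=> ij; rewrite /Dgen !mxE (negbTE ij).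
by rewrite addr_ge0 ?Ha ?rsum_ge0.
Qed.

Lemma D_rowsum i : \sum_j D i j = 0.
Proof.
rewrite /Dgen.
under eq_bigr do rewrite !mxE.
rewrite big_split /= (bigD1 i) //= eqxx.
rewrite [X in _ + X + _](eq_bigr (fun j => a i j)); last first.
  by move=> j ji; rewrite eq_sym (negbTE ji).
by rewrite addrAC subrK addNr.
Qed.

Section Resolvent.
Variable c : R.
Hypothesis c0 : 0 < c.
Local Notation A := (c%:M - D).

Lemma Kmax (x : 'cV[R]_N) : exists i,
  (forall k, `|x k 0| <= `|x i 0|) /\ c * `|x i 0| <= `|(A *m x) i 0|.
Proof.
pose i0 := Ordinal HN.
case: (@arg_maxP _ _ _ i0 xpredT (fun i => `|x i 0|)) => // i _ Hi.
exists i; split; first by move=> k; apply: Hi.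
set xi := x i 0.
have E : (A *m x) i 0 = c * xi - \sum_j D i j * x j 0.
  by rewrite mulmxBl mul_scalar_mx !mxE.
have H1 : \sum_j D i j * (xi * x j 0) <= 0.
  apply: (@le_trans _ _ (\sum_j D i j * (xi * xi))).
    apply: ler_sum => j _.
    have [<-|ij] := eqVneq i j; first by rewrite /xi lexx.
    apply: ler_wpM2l; first exact: D_offdiag.
    apply: (@le_trans _ _ (`|xi| * `|x j 0|)).
      by rewrite -normrM ler_norm.
    rewrite -[xi * xi]ger0_norm ?normrM; last by rewrite -expr2 sqr_ge0.
    by apply: ler_wpM2l => //; apply: Hi.
  by rewrite -mulr_suml D_rowsum mul0r.
have H2 : c * (xi * xi) <= xi * (A *m x) i 0.
  rewrite E mulrBr big_distrr /=.
  have -> : \sum_j xi * (D i j * x j 0) = \sum_j D i j * (xi * x j 0).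
    by apply: eq_bigr => j _; rewrite mulrCA.
  by rewrite mulrCA lerDl oppr_ge0.
have H3 : c * `|xi| * `|xi| <= `|(A *m x) i 0| * `|xi|.
  rewrite -mulrA -normrM ger0_norm; last by rewrite -expr2 sqr_ge0.
  apply: le_trans H2 _; rewrite mulrC -normrM; exact: ler_norm.
have [z0|nz] := eqVneq `|xi| 0; first by rewrite z0 mulr0.
by rewrite -(ler_pM2r (_ : 0 < `|xi|)) // lt_def nz normr_ge0.
Qed.

Lemma A_unit : A \in unitmx.
Proof.
rewrite unitmxE unitfE -det_tr; apply/negP => /det0P [v vn0 hv].
have hx : A *m v^T = 0 by rewrite -[A]trmxK -trmx_mul hv trmx0.
have [i [Hk Hc]] := Kmax v^T.
have z : (0 : 'cV[R]_N) i 0 = 0 by rewrite mxE.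
rewrite hx z normr0 in Hc.
have xi0 : `|v^T i 0| <= 0.
  by rewrite -(ler_pM2l c0) mulr0.
apply: (negP vn0); apply/eqP/matrixP => p q.
rewrite (ord1 p) !mxE.
apply/eqP; rewrite -normr_le0.
by have := Hk q; rewrite [v^T q 0]mxE => h; apply: le_trans h xi0.
Qed.

Lemma inv_bound : norm_inf (invmx A) <= c^-1.
Proof.
apply: norm_le; first by rewrite invr_ge0 ltW.
move=> i; set X := invmx A.
pose y : 'cV[R]_N := \col_j Num.sg (X i j).
have Ay : A *m (X *m y) = y by rewrite mulmxA mulmxV ?A_unit // mul1mx.
have [k [Hk Hc]] := Kmax (X *m y).
rewrite Ay in Hc.
have xi : (X *m y) i 0 = \sum_j `|X i j|.
  by rewrite mxE; apply: eq_bigr => j _; rewrite mxE normrEsg mulrC.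
have y1 : `|y k 0| <= 1.
  by rewrite mxE normr_sg; case: (_ != 0).
have ck : c * `|(X *m y) k 0| <= 1 := le_trans Hc y1.
rewrite -xi.
apply: le_trans (ler_norm _) _; apply: le_trans (Hk i) _.
have ci : 0 <= c^-1 by rewrite invr_ge0 ltW.
have := ler_wpM2l ci ck.
by rewrite mulr1 mulrA mulVf ?mul1r // lt0r_neq0.
Qed.

End Resolvent.
End Gen.

Lemma comps_prop f n s : s \in comps_aux f n ->
  sumn s = n /\ all (fun l => 0 < l)%N s.
Proof.
elim: f n s => [|f IH] n s /=.
  by case: (n =P 0%N) => [->|_]; [rewrite inE => /eqP -> | rewrite in_nil].
case: (n =P 0%N) => [->|_]; first by rewrite inE => /eqP ->.
move=> /flattenP [t /mapP [l hl ->] /mapP [s' hs' ->]].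
move: hl; rewrite mem_iota => /andP [l1 ln].
have [h1 h2] := IH _ _ hs'.
rewrite /= h1 h2 l1; split => //.
by rewrite subnKC // -ltnS -(add1n n).
Qed.

Section Chain.
Variables (R : realType) (N : nat) (delta : R).
Variables (a : 'I_N -> 'I_N -> R) (b : nat -> 'I_N -> 'I_N -> R).

Fixpoint bnd (acc : nat) (s : seq nat) : R :=
  match s with
  | [::] => 1
  | l :: s' =>
      match s' with
      | [::] => norm_inf (Cmat b l)
      | _ => norm_inf (Cmat b l) * ((acc + l)%:R * delta)^-1 * bnd (acc + l) s'
      end
  end.

Lemma bnd_eq acc s : s != [::] ->
  bnd acc s * ((acc + sumn s)%:R * delta)^-1 =
  (\prod_(l <- s) norm_inf (Cmat b l)) /
     (delta ^+ size s * \prod_(j < size s) (acc + sumn (take j.+1 s))%:R).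
Proof.
elim: s acc => [//|l s IH] acc _.
case: s IH => [|l' s'] IH.
  rewrite /= big_ord_recl big_ord0 big_cons big_nil /=.
  by rewrite !mulr1 expr1 [_ * delta]mulrC.
have E := IH (acc + l)%N isT.
have bndE : bnd acc (l :: l' :: s') =
  norm_inf (Cmat b l) * ((acc + l)%:R * delta)^-1 * bnd (acc + l) (l' :: s') by [].
move: (l' :: s') E bndE => s1 E bndE {IH}.
have P : \prod_(j < (size s1).+1) (acc + sumn (take j.+1 (l :: s1)))%:R =
   (acc + l)%:R * \prod_(j < size s1) (acc + l + sumn (take j.+1 s1))%:R :> R.
  rewrite big_ord_recl /= take0 addn0; congr (_ * _).
  by apply: eq_bigr => i _; rewrite /bump leq0n addnA.
have S : (acc + sumn (l :: s1))%N = (acc + l + sumn s1)%N by rewrite /= addnA.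
rewrite bndE big_cons [size _]/= P S exprS.
rewrite -mulrA E !invfM.

ring.
Qed.

Hypothesis HN : (0 < N)%N.
Hypothesis Hdelta : 0 < delta.
Hypothesis Ha : forall i j : 'I_N, i != j -> 0 <= a i j.
Hypothesis Hb : forall (r : nat) (i j : 'I_N), (0 < r)%N -> 0 <= b r i j.
Hypothesis Hmom : forall (p : nat) (i j : 'I_N),
     cvgn (fun n => \sum_(1 <= r < n) (r%:R ^+ p * b r i j)).

Lemma chain_le acc s : all (fun l => 0 < l)%N s -> s != [::] ->
  norm_inf (chain a b delta acc s) <= bnd acc s.
Proof.
elim: s acc => [//|l s IH] acc /= /andP [l0 hs] _.
case: s IH hs => [|l' s'] IH hs; first by [].
apply: le_trans (@norm_mul _ _ _ _) _.
apply: ler_pM; [exact: norm_ge0 | exact: norm_ge0 | | exact: IH].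
apply: le_trans (@norm_mul _ _ _ _) _.
apply: ler_pM; [exact: norm_ge0 | exact: norm_ge0 | exact: lexx | ].
apply: inv_bound => //.
by rewrite mulr_gt0 // ltr0n addn_gt0 l0 orbT.
Qed.

End Chain.

Lemma pi_le (R : realType) (N : nat) (Q : 'M[R]_N) (pi : 'rV[R]_N) (M : 'M[R]_N) :
  invariant_dist Q pi ->
  (pi *m M *m (const_mx 1 : 'cV[R]_N)) 0 0 <= norm_inf M.
Proof.
move=> [p0 [p1 _]].
rewrite -mulmxA mxE.
apply: (@le_trans _ _ (\sum_i pi 0 i * norm_inf M)).
  apply: ler_sum => i _; apply: ler_wpM2l => //.
  rewrite mxE; apply: le_trans (ler_norm _) _.
  apply: le_trans (ler_norm_sum _ _ _) _.
  apply: le_trans (@row_le_norm _ _ M i).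
  by apply: ler_sum => j _; rewrite mxE mulr1.
by rewrite -mulr_suml p1 mul1r.
Qed.

Theorem mainTheorem6 (R : realType) (N : nat) (delta : R)
  (a : 'I_N -> 'I_N -> R) (b : nat -> 'I_N -> 'I_N -> R) (pi : 'rV[R]_N)
  (HN : (0 < N)%N) (Hdelta : 0 < delta)
  (Ha : forall i j : 'I_N, i != j -> 0 <= a i j)
  (Hb : forall (r : nat) (i j : 'I_N), (0 < r)%N -> 0 <= b r i j)
  (Hmom : forall (p : nat) (i j : 'I_N),
     cvgn (fun n => \sum_(1 <= r < n) (r%:R ^+ p * b r i j)))
  (Hirr : irreducible_gen (Dgen a b))
  (Hpi : invariant_dist (Dgen a b) pi)
  (m : nat) (Hm : (1 <= m)%N) :
  Bmoment a b delta pi m <=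
  \sum_(s <- compositions m)
     (\prod_(l <- s) norm_inf (Cmat b l)) /
     (delta ^+ size s * \prod_(j < size s) (sumn (take j.+1 s))%:R).
Proof.
rewrite /Bmoment big_seq [X in _ <= X]big_seq.
apply: ler_sum => s hs.
have [hsum hpos] := @comps_prop _ _ _ hs.
have sn0 : s != [::] by case: s hs hsum hpos => //= _ h; move: Hm; rewrite -h.
have m0 : 0 <= (m%:R * delta)^-1 by rewrite invr_ge0 mulr_ge0 // ltW.
apply: le_trans (ler_wpM2l m0 (@pi_le _ _ _ _ _ Hpi)) _.
apply: le_trans (ler_wpM2l m0 (@chain_le _ _ _ _ _ HN Hdelta Ha Hb Hmom 0 s hpos sn0)) _.
rewrite mulrC -hsum -[sumn s]add0n (@bnd_eq _ _ delta b 0 s sn0).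
rewrite le_eqVlt; apply/orP; left; apply/eqP; congr (_ / (_ * _)).

Qed.
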